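(* If $\tilde y\in\mathbb{R}^{\mathcal{A}}$ satisfies $\phi_\lambda(\tilde y)<0$ for some $\lambda\in\Lambda_X(\mathcal{A})$, then $\exp\tilde y\notin C_X(\mathcal{A})^*$ (with $\exp$ applied entrywise).
   Context: $X\subset\mathbb{R}^n$ is a nonempty closed convex set and $\mathcal{A}\subset\mathbb{R}^n$ is a nonempty finite set such that the functions $x\mapsto\exp(\alpha^Tx)$, $\alpha\in\mathcal{A}$, are linearly independent on $X$. $\mathbb{R}^{\mathcal{A}}$ denotes real vectors indexed by $\mathcal{A}$. $\mathcal{A}\nu=\sum_\alpha\alpha\nu_\alpha$. $\sigma_X(y)=\sup\{y^Tx:x\in X\}$. $N_\beta=\{\nu\in\mathbb{R}^{\mathcal{A}}:\nu_\alpha\ge0\ \forall\alpha\neq\beta,\ \sum_\alpha\nu_\alpha=0\}$. A vector $\nu^\star\in N_\beta$ is an $X$-circuit of $\mathcal{A}$ if (1) $\nu^\star\neq0$, (2) $\sigma_X(-\mathcal{A}\nu^\star)<\infty$, and (3) $\nu^\star$ cannot be written as a convex combination of two non-proportional vectors $\nu^{(1)},\nu^{(2)}\in N_\beta$ such that the map $\nu\mapsto\sigma_X(-\mathcal{A}\nu)$ is affine on the segment $[\nu^{(1)},\nu^{(2)}]$. $\Lambda_X(\mathcal{A})$ is the set of all $X$-circuits $\lambda$ (over all $\beta\in\mathcal{A}$) normalized so that the unique negative entry equals $-1$. The functional form of $\lambda$ is the affine function $\phi_\lambda(y)=\sum_\alpha y_\alpha\lambda_\alpha+\sigma_X(-\mathcal{A}\lambda)$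 on $\mathbb{R}^{\mathcal{A}}$. Signomials $f=\sum_\alpha c_\alpha\mathrm{e}^\alpha$, $\mathrm{e}^\alpha(x)=\exp(\alpha^Tx)$, are identified with $c\in\mathbb{R}^{\mathcal{A}}$; $C_X(\mathcal{A},\beta)$ is the set of $c$ with $f$ nonnegative on $X$ and $c_\alpha\ge0$ for $\alpha\ne\beta$; $C_X(\mathcal{A})=\sum_{\beta\in\mathcal{A}}C_X(\mathcal{A},\beta)$, and $C_X(\mathcal{A})^*=\{v\in\mathbb{R}^{\mathcal{A}}:v^Tc\ge0\ \forall c\in C_X(\mathcal{A})\}$. *)

(* Defs.v *)
(* R : realType, R^n = 'rV[R]_n. *)
From mathcomp Require Import all_boot all_order all_algebra.
From mathcomp Require Import all_classical all_reals all_analysis.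
Set Implicit Arguments. Unset Strict Implicit. Unset Printing Implicit Defensive.
Import Order.TTheory GRing.Theory Num.Theory.
Local Open Scope classical_set_scope.
Local Open Scope ring_scope.

Section SigDefs.
Variables (R : realType) (n : nat).

Definition dotv (y x : 'rV[R]_n) : R := \sum_(j < n) y 0 j * x 0 j.

Definition convexR (X : set 'rV[R]_n) : Prop :=
  forall x y t, X x -> X y -> 0 <= t <= 1 -> X (t *: x + (1 - t) *: y).

Definition sigmaX (X : set 'rV[R]_n) (y : 'rV[R]_n) : \bar R :=
  ereal_sup [set (dotv y x)%:E | x in X].

(* The finite set A is given as the (injective) image of a : I -> R^n;
   vectors in R^A are functions I -> R. *)
Variable I : finType.

Definition Amul (a : I -> 'rV[R]_n) (nu : I -> R) : 'rV[R]_n :=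
  \sum_(i : I) nu i *: a i.

Definition exp_lin_indep (X : set 'rV[R]_n) (a : I -> 'rV[R]_n) : Prop :=
  forall c : I -> R,
    (forall x, X x -> \sum_(i : I) c i * expR (dotv (a i) x) = 0) ->
    forall i, c i = 0.

Definition Nbeta (beta : I) : set (I -> R) :=
  [set nu | (forall i, i != beta -> 0 <= nu i) /\ \sum_(i : I) nu i = 0].

Definition sigA (X : set 'rV[R]_n) (a : I -> 'rV[R]_n) (nu : I -> R) : \bar R :=
  sigmaX X (- Amul a nu).

Definition affine_on_segment (X : set 'rV[R]_n) (a : I -> 'rV[R]_n)
    (nu1 nu2 : I -> R) : Prop :=
  forall t : R, 0 <= t <= 1 ->
    sigA X a (fun i => (1 - t) * nu1 i + t * nu2 i) =
    ((1 - t)%:E * sigA X a nu1 + t%:E * sigA X a nu2)%E.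

Definition proportional (nu1 nu2 : I -> R) : Prop :=
  exists k : R, (nu1 = fun i => k * nu2 i) \/ (nu2 = fun i => k * nu1 i).

Definition is_X_circuit (X : set 'rV[R]_n) (a : I -> 'rV[R]_n) (beta : I)
    (nu : I -> R) : Prop :=
  [/\ Nbeta beta nu,
      nu <> (fun=> 0),
      (sigA X a nu < +oo)%E &
      ~ (exists nu1 nu2 (th : R),
           [/\ Nbeta beta nu1 /\ Nbeta beta nu2, ~ proportional nu1 nu2,
               0 < th < 1,
               nu = (fun i => th * nu1 i + (1 - th) * nu2 i) &
               affine_on_segment X a nu1 nu2])].

(* Lambda_X(A): circuits normalized so that the unique negative entry
   (the beta entry) equals -1 *)
Definition LambdaX (X : set 'rV[R]_n) (a : I -> 'rV[R]_n) : set (I -> R) :=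
  [set lam | exists beta, is_X_circuit X a beta lam /\ lam beta = -1].

Definition phi_form (X : set 'rV[R]_n) (a : I -> 'rV[R]_n) (lam y : I -> R)
  : \bar R :=
  ((\sum_(i : I) y i * lam i)%:E + sigA X a lam)%E.

Definition CXbeta (X : set 'rV[R]_n) (a : I -> 'rV[R]_n) (beta : I)
  : set (I -> R) :=
  [set c | (forall x, X x -> 0 <= \sum_(i : I) c i * expR (dotv (a i) x)) /\
           (forall i, i != beta -> 0 <= c i)].

Definition CX (X : set 'rV[R]_n) (a : I -> 'rV[R]_n) : set (I -> R) :=
  [set c | exists cb : I -> I -> R,
      (forall beta, CXbeta X a beta (cb beta)) /\
      c = (fun i => \sum_(beta : I) cb beta i)].

Definition CXdual (X : set 'rV[R]_n) (a : I -> 'rV[R]_n) : set (I -> R) :=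
  [set v | forall c, CX X a c -> 0 <= \sum_(i : I) v i * c i].

End SigDefs.

(* Main.v *)
Require Import Defs.
From mathcomp Require Import all_boot all_order all_algebra.
From mathcomp Require Import all_classical all_reals all_analysis.
From mathcomp Require Import ring lra.
Import Order.TTheory GRing.Theory Num.Theory numFieldNormedType.Exports.
Local Open Scope classical_set_scope.
Local Open Scope ring_scope.

Lemma dotvN (R : realType) n (v x : 'rV[R]_n) : dotv (- v) x = - dotv v x.
Proof. rewrite /dotv -sumrN; apply: eq_bigr => j _; by rewrite mxE mulNr. Qed.

Lemma dotv_Amul (R : realType) n (I : finType) (a : I -> 'rV[R]_n) lam x :
  dotv (Amul a lam) x = \sum_i lam i * dotv (a i) x.
Proof.
rewrite /dotv /Amul.
under eq_bigr => j _ do rewrite summxE mulr_suml.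
rewrite exchange_big; apply: eq_bigr => i _; rewrite mulr_sumr.
by apply: eq_bigr => j _; rewrite mxE mulrA.
Qed.

Lemma sum_neq (R : realType) (I : finType) (b : I) (f : I -> R) :
  \sum_(i | i != b) f i = \sum_i f i - f b.
Proof. by rewrite [X in _ = X - _](bigD1 b) //= addrC addrK. Qed.

Theorem lemma5p13 (R : realType) (n : nat) (I : finType)
    (X : set 'rV[R]_n) (a : I -> 'rV[R]_n)
    (hX0 : X !=set0) (hXcl : closed X) (hXcv : convexR X)
    (hI : (0 < #|I|)%N) (ha : injective a)
    (hind : exp_lin_indep X a)
    (ytil : I -> R)
    (hphi : exists2 lam, LambdaX X a lam & (phi_form X a lam ytil < 0)%E) :
  ~ CXdual X a (fun i => expR (ytil i)).
Proof.
case: hphi => lam [beta [[[lnn lsum] _ sigfin _] lb]] hph.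
have hub : forall x, X x -> ((dotv (- Amul a lam) x)%:E <= sigA X a lam)%E.
  move=> x Xx; apply: ereal_sup_ubound; by exists x.
case: hX0 => x0 Xx0.
have [s sE] : exists s, sigA X a lam = s%:E.
  move: sigfin (hub _ Xx0); case: (sigA X a lam) => [r| |] //; by exists r.
set S := \sum_i ytil i * lam i.
have hSs : S + s < 0.
  by move: hph; rewrite /phi_form sE -EFinD lte_fin.
pose c := fun i => lam i * expR (- ytil i) *
  (if i == beta then expR (- (S + s)) else 1).
move=> hd.
have hc : CX X a c.
  exists (fun b => if b == beta then c else fun=> 0); split.
  - move=> b; case: eqP => [->|_]; last first.
      split=> [x _|i _] //; by rewrite big1 // => i _; rewrite mul0r.
    split=> [x Xx|i ib]; last first.
      by rewrite /c (negbTE ib) mulr1 mulr_ge0 ?lnn ?expR_ge0.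
    pose u := fun i => dotv (a i) x - ytil i.
    pose m := u beta - (S + s).
    have E : forall i, c i * expR (dotv (a i) x) =
       lam i * expR (u i) * (if i == beta then expR (- (S + s)) else 1).
      move=> i; rewrite /c /u [LHS]mulrAC -[lam i * _ * expR _]mulrA -expRD.
      by rewrite [- _ + _]addrC.
    under eq_bigr => i _ do rewrite E.
    rewrite (bigD1 beta) //= eqxx lb.
    have K : \sum_(i | i != beta) lam i * expR m * (1 + u i - m) <=
             \sum_(i | i != beta)
               lam i * expR (u i) * (if i == beta then expR (- (S + s)) else 1).
      apply: ler_sum => i ib; rewrite (negbTE ib) mulr1 -mulrA.
      apply: ler_wpM2l; first by rewrite lnn.
      have -> : expR (u i) = expR m * expR (u i - m).
        by rewrite -expRD addrC subrK.
      apply: ler_wpM2l; first exact: expR_ge0.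
      by rewrite -addrA expR_ge1Dx.
    have K2 : \sum_(i | i != beta) lam i * expR m * (1 + u i - m) =
              expR m * \sum_(i | i != beta) lam i * (1 + u i - m).
      by rewrite mulr_sumr; apply: eq_bigr => i _; rewrite mulrAC mulrC.
    have K3 : 1 <= \sum_(i | i != beta) lam i * (1 + u i - m).
      rewrite sum_neq lb.
      have -> : \sum_i lam i * (1 + u i - m) = \sum_i lam i * u i.
        have -> : \sum_i lam i * (1 + u i - m) =
                  \sum_i lam i * u i + (1 - m) * \sum_i lam i.
          rewrite mulr_sumr -big_split; apply: eq_bigr => i _ /=; ring.
        by rewrite lsum mulr0 addr0.
      have -> : \sum_i lam i * u i = dotv (Amul a lam) x - S.
        rewrite dotv_Amul /S -sumrB; apply: eq_bigr => i _.
        rewrite /u; ring.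
      have := hub x Xx; rewrite sE lee_fin dotvN => hx.
      rewrite /m; lra.
    have K4 : expR m <= \sum_(i | i != beta)
               lam i * expR (u i) * (if i == beta then expR (- (S + s)) else 1).
      apply: le_trans K; rewrite K2 -[X in X <= _]mulr1.
      by apply: ler_wpM2l; [exact: expR_ge0|].
    have -> : -1 * expR (u beta) * expR (- (S + s)) = - expR m.
      by rewrite mulN1r mulNr -expRD.
    by rewrite addrC subr_ge0.
  - apply: funext => i; rewrite (bigD1 beta) //= eqxx big1 ?addr0 //.
    by move=> b /negbTE ->.
have := hd c hc.
have -> : \sum_i expR (ytil i) * c i =
          \sum_i lam i * (if i == beta then expR (- (S + s)) else 1).
  apply: eq_bigr => i _; rewrite /c !mulrA [expR _ * lam i]mulrC -[lam i * _ * _]mulrA.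
  by rewrite expRxMexpNx_1 mulr1.
rewrite (bigD1 beta) //= eqxx lb.
under eq_bigr => i /negbTE -> do rewrite mulr1.
rewrite sum_neq lsum lb.
have := expR_ge1Dx (- (S + s)).
move: hSs; move: (expR (- (S + s))) => e; move: (S + s) => t.
clear; move=> ht h1 h2; lra.
Qed.
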